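(* Let $\mathcal{A}$ be a finite alphabet, $\Theta:\mathcal{A}^*\to\mathcal{A}^*$ an involutive antimorphism, and $\mathbf{u}\in\mathcal{A}^{\mathbb{N}}$ a recurrent infinite word with $D_\Theta(\mathbf{u})<+\infty$. Then the language of $\mathbf{u}$ is closed under $\Theta$, i.e., for every factor $w$ of $\mathbf{u}$, $\Theta(w)$ is also a factor of $\mathbf{u}$.
   Context: An involutive antimorphism on $\mathcal{A}^*$ is a map $\Theta$ with $\Theta^2=\mathrm{Id}$ and $\Theta(uv)=\Theta(v)\Theta(u)$ for all words $u,v$. A word $w$ is a $\Theta$-palindrome if $\Theta(w)=w$. For a finite word $w$, $\mathrm{Pal}_\Theta(w)$ is the set of distinct $\Theta$-palindromes occurring as factors of $w$ (including the empty word), and $G_\Theta(w)$ is the number of sets $\{a,\Theta(a)\}$ where $a$ is a letter occurring in $w$ with $a\neq\Theta(a)$. The $\Theta$-palindromic defect of a finite word is $D_\Theta(w)=|w|+1-G_\Theta(w)-\#\mathrm{Pal}_\Theta(w)$, and for an infinite word $\mathbf{u}$, $D_\Theta(\mathbf{u})=\sup\{D_\Theta(w): w \text{ a factor of } \mathbf{u}\}$. An infinite word is recurrent if each of its factors occurs in it infinitely many times. *)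

(* Defs.v *)
From mathcomp Require Import all_boot all_order all_algebra.
Set Implicit Arguments. Unset Strict Implicit. Unset Printing Implicit Defensive.

Section Words.
Variable A : finType.

Definition involutive_antimorphism (Th : seq A -> seq A) : Prop :=
  (forall w, Th (Th w) = w) /\ (forall u v, Th (u ++ v) = Th v ++ Th u).

Definition is_pal (Th : seq A -> seq A) (w : seq A) : bool := Th w == w.

Definition factors_fin (w : seq A) : seq (seq A) :=
  [seq take j (drop i w) | i <- iota 0 (size w).+1, j <- iota 0 (size w).+1].

Definition Pal (Th : seq A -> seq A) (w : seq A) : seq (seq A) :=
  undup [seq x <- factors_fin w | is_pal Th x].

(* image of a letter under Theta (Theta maps letters to letters) *)
Definition th_letter (Th : seq A -> seq A) (a : A) : A := head a (Th [:: a]).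

Definition G (Th : seq A -> seq A) (w : seq A) : nat :=
  #| [set [set a; th_letter Th a] | a in [set x : A | (x \in w) && (Th [:: x] != [:: x])]] |.

Definition defect (Th : seq A -> seq A) (w : seq A) : int :=
  ((size w).+1)%:Z - (G Th w)%:Z - (size (Pal Th w))%:Z.

Definition occurs_at (u : nat -> A) (w : seq A) (i : nat) : Prop :=
  w = mkseq (fun k => u (i + k)) (size w).

Definition factor (u : nat -> A) (w : seq A) : Prop := exists i, occurs_at u w i.

Definition recurrent (u : nat -> A) : Prop :=
  forall w, factor u w -> forall N, exists i, (N <= i)%N /\ occurs_at u w i.

(* D_Theta(u) < +oo : the defects of the factors are bounded *)
Definition finite_defect (Th : seq A -> seq A) (u : nat -> A) : Prop :=
  exists K : int, forall w, factor u w -> (defect Th w <= K)%R.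

End Words.

(* Main.v *)
Require Import Defs.
From mathcomp Require Import all_boot all_order all_algebra zify.
Set Implicit Arguments. Unset Strict Implicit. Unset Printing Implicit Defensive.

Section S.
Variable A : finType.
Variable Th : seq A -> seq A.
Hypothesis HT : involutive_antimorphism Th.

Lemma Th_inv w : Th (Th w) = w. Proof. by case: HT. Qed.
Lemma Th_cat u v : Th (u ++ v) = Th v ++ Th u. Proof. by case: HT. Qed.

Lemma Th_nil : Th [::] = [::].
Proof.
have := congr1 size (Th_cat [::] [::]); rewrite /= size_cat.
by case: (Th [::]) => //= x s; rewrite addSn => /eqP; rewrite eqSS -{1}(addn0 (size s)) eqn_add2l.
Qed.

Lemma Th_eq_nil w : Th w = [::] -> w = [::].
Proof. by move=> H; rewrite -(Th_inv w) H Th_nil. Qed.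

Lemma Th_letter a : Th [:: a] = [:: th_letter Th a].
Proof.
rewrite /th_letter; case E: (Th [:: a]) => [|b [|c s]] //=.
  by have := Th_eq_nil E.
have := Th_inv [:: a]; rewrite E -cat1s Th_cat.
case E1: (Th (c :: s)) => [|x1 s1]; first by have := Th_eq_nil E1.
case E2: (Th [:: b]) => [|x2 s2]; first by have := Th_eq_nil E2.
by case: s1 E1.
Qed.

Local Notation sg := (@th_letter A Th).

Lemma sg_inv a : sg (sg a) = a.
Proof. by have := Th_inv [:: a]; rewrite !Th_letter => -[]. Qed.

Lemma Th_rcons p a : Th (rcons p a) = sg a :: Th p.
Proof. by rewrite -cats1 Th_cat Th_letter. Qed.

Lemma infixP' (x w : seq A) : infix x w -> exists s s' : seq A, w = s ++ x ++ s'.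
Proof. by move/infixP. Qed.
Lemma suffixP' (x w : seq A) : suffix x w -> exists s : seq A, w = s ++ x.
Proof. by move/suffixP. Qed.

Lemma mem_factors (x w : seq A) : (x \in factors_fin w) = infix x w.
Proof.
apply/allpairsP/idP.
  move=> [[i j] /= [_ _ ->]].
  apply: (infix_trans (infix_take _ j)). exact: infix_drop.
move=> /infixP' [s [s' E]].
have Hs : size s <= size w by rewrite E !size_cat; lia.
have Hx : size x <= size w by rewrite E !size_cat; lia.
exists (size s, size x); split; rewrite ?mem_iota ?add0n ?ltnS //.
by rewrite E drop_size_cat // take_size_cat.
Qed.

Lemma mem_Pal (x w : seq A) : (x \in Pal Th w) = infix x w && (Th x == x).
Proof. by rewrite /Pal mem_undup mem_filter mem_factors andbC. Qed.

Lemma Pal_uniq (w : seq A) : uniq (Pal Th w). Proof. exact: undup_uniq. Qed.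

Lemma new_suffix (x p : seq A) a : infix x (rcons p a) -> ~~ infix x p -> suffix x (rcons p a).
Proof. by rewrite infix_rconsl => /orP [] // ->. Qed.

Lemma new_pal_uniq (p : seq A) a (x y : seq A) :
  x \in Pal Th (rcons p a) -> x \notin Pal Th p ->
  y \in Pal Th (rcons p a) -> y \notin Pal Th p -> x = y.
Proof.
wlog Hxy : x y / size x <= size y.
  move=> W Hx Hx' Hy Hy'; case: (leqP (size x) (size y)) => H.
    exact: W.
  by apply/esym/W => //; apply: ltnW.
rewrite !mem_Pal => /andP [ix /eqP px] nx /andP [iy /eqP py] ny.
have nx' : ~~ infix x p by move: nx; rewrite px eqxx andbT.
have ny' : ~~ infix y p by move: ny; rewrite py eqxx andbT.
have /suffixP' [s1 E1] := new_suffix ix nx'.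
have /suffixP' [s2 E2] := new_suffix iy ny'.
have : suffix x y.
  have := congr1 (drop (size s2)) E2; rewrite drop_size_cat // => <-.
  rewrite E1 suffixE size_drop size_cat.
  have H1 : size s2 <= size s1.
    have := congr1 size E1; rewrite E2 !size_cat => E; lia.
  rewrite drop_drop; apply/eqP.
  have -> : size s1 + size x - size s2 - size x + size s2 = size s1 by lia.
  by rewrite drop_size_cat.
move=> /suffixP' [r Er].
have : y = x ++ Th r by rewrite -{1}py Er Th_cat px.
case Ethr : (Th r) => [|b t]; first by rewrite cats0.
move=> Ey; exfalso; apply: (negP nx').
move: E2; rewrite Ey lastI -!rcons_cat => /rcons_inj [-> _].
exact: infix_infix.
Qed.

Lemma size_le1 (l : seq (seq A)) : uniq l -> (forall x y, x \in l -> y \in l -> x = y) -> size l <= 1.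
Proof.
case: l => [|x [|y l]] //= /andP [nx _] H.
by move: nx; rewrite (H x y) ?inE ?eqxx ?orbT.
Qed.

Lemma size_Pal_rcons (p : seq A) a : size (Pal Th (rcons p a)) <= size (Pal Th p) + 1.
Proof.
set t := Pal Th (rcons p a); set s := Pal Th p.
rewrite -(count_predC (mem s) t) leq_add //.
  rewrite -size_filter uniq_leq_size ?filter_uniq ?Pal_uniq //.
  by move=> x; rewrite mem_filter => /andP [].
rewrite -size_filter size_le1 ?filter_uniq ?Pal_uniq // => x y.
rewrite !mem_filter /= => /andP [nx xt] /andP [ny yt].
exact: (new_pal_uniq xt nx yt ny).
Qed.

Lemma size_Pal_sub (p q : seq A) : {subset Pal Th q <= Pal Th p} -> size (Pal Th q) <= size (Pal Th p).
Proof. by move=> H; apply: uniq_leq_size => //; apply: Pal_uniq. Qed.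

Lemma no_new_pal (p : seq A) a : sg a != a -> sg a \notin p ->
  {subset Pal Th (rcons p a) <= Pal Th p}.
Proof.
move=> n1 n2 x; rewrite !mem_Pal => /andP [ix /eqP px]; rewrite px eqxx andbT.
apply/negPn/negP => nx.
have /suffixP' [s E] := new_suffix ix nx.
case/lastP: x ix nx px E => [|x' c] ix nx px E; first by rewrite infix0s in nx.
have := E; rewrite -rcons_cat => /rcons_inj [_ Eca]; subst c.
have : sg a \in rcons p a.
  by rewrite E mem_cat -px Th_rcons inE eqxx orbT.
by rewrite mem_rcons inE (negbTE n1) (negbTE n2).
Qed.

Definition S (p : seq A) := [set x : A | (x \in p) && (Th [:: x] != [:: x])].
Definition fG (x : A) := [set x; sg x].

Lemma GE (p : seq A) : G Th p = #|fG @: S p|.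
Proof. by []. Qed.

Lemma inS (p : seq A) x : (x \in S p) = (x \in p) && (sg x != x).
Proof. by rewrite inE Th_letter eqseq_cons andbT. Qed.


Lemma G_le_mem (p : seq A) a : a \in p -> G Th (rcons p a) <= G Th p.
Proof.
move=> ap; rewrite !GE; apply/subset_leq_card/imsetS/subsetP => x.
rewrite !inS mem_rcons inE => /andP [/orP [/eqP->|] ->] //.
by rewrite ap.
Qed.

Lemma G_le1 (p : seq A) a : (sg a == a) || (sg a \in p) -> G Th (rcons p a) <= G Th p.
Proof.
move=> c; rewrite !GE; apply/subset_leq_card/subsetP => y /imsetP [x].
rewrite inS mem_rcons inE => /andP [/orP [/eqP->|xp] nx] ->; last by apply: imset_f; rewrite inS xp nx.
move: c; rewrite (negbTE nx) /= => sp.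
have -> : fG a = fG (sg a) by rewrite /fG sg_inv setUC.
by apply: imset_f; rewrite inS sp sg_inv eq_sym nx.
Qed.

Lemma G_le2 (p : seq A) a : G Th (rcons p a) <= (G Th p).+1.
Proof.
rewrite !GE; apply: (@leq_trans #|fG a |: (fG @: S p)|).
  apply/subset_leq_card/subsetP => y /imsetP [x].
  rewrite inS mem_rcons inE => /andP [/orP [/eqP->|xp] nx] ->; first by rewrite setU11.
  by rewrite setU1r //; apply: imset_f; rewrite inS xp nx.
by rewrite cardsU1; case: (_ \notin _).
Qed.

Lemma defect_rcons (p : seq A) a : (defect Th p <= defect Th (rcons p a))%R.
Proof.
have H : G Th (rcons p a) + size (Pal Th (rcons p a)) <= G Th p + size (Pal Th p) + 1.
  case: (boolP ((sg a == a) || (sg a \in p))) => c.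
    have := G_le1 c; have := size_Pal_rcons p a; lia.
  move: c; rewrite negb_or => /andP [c1 c2].
  have := G_le2 p a; have := size_Pal_sub (no_new_pal c1 c2); lia.
rewrite /defect size_rcons; lia.
Qed.

Lemma new_pal_exists (p : seq A) a : a \in p -> (defect Th (rcons p a) <= defect Th p)%R ->
  exists q, q \in Pal Th (rcons p a) /\ q \notin Pal Th p.
Proof.
move=> ap D.
case: (boolP (all (fun q => q \in Pal Th p) (Pal Th (rcons p a)))) => [/allP H|].
  have := size_Pal_sub H; have := G_le_mem ap; move: D; rewrite /defect size_rcons; lia.
by move=> /allPn [q qin qn]; exists q.
Qed.

Lemma infix_Th (x y : seq A) : infix x y -> infix (Th x) (Th y).
Proof. by move=> /infixP' [s [s' ->]]; rewrite !Th_cat -catA; apply: infix_infix. Qed.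

Lemma suffix_cmp (x y v : seq A) : suffix x v -> suffix y v -> size x <= size y -> suffix x y.
Proof.
move=> /suffixP' [s1 E1] /suffixP' [s2 E2] H.
have := congr1 (drop (size s2)) E2; rewrite drop_size_cat // => <-.
rewrite E1 suffixE size_drop size_cat.
have H1 : size s2 <= size s1.
  have := congr1 size E1; rewrite E2 !size_cat => E; lia.
rewrite drop_drop; apply/eqP.
have -> : size s1 + size x - size s2 - size x + size s2 = size s1 by lia.
by rewrite drop_size_cat.
Qed.

End S.

Section Inf.
Variable A : finType.
Variable u : nat -> A.

Definition pre n := mkseq u n.

Lemma pre_add j m : pre (j + m) = pre j ++ mkseq (fun k => u (j + k)) m.
Proof.
elim: m => [|m IH]; first by rewrite addn0 cats0.
by rewrite addnS /pre mkseqS -/(pre _) IH mkseqS rcons_cat.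
Qed.

Lemma preS n : pre n.+1 = rcons (pre n) (u n).
Proof. exact: mkseqS. Qed.

Lemma factor_pre n : factor u (pre n).
Proof. by exists 0; rewrite /occurs_at size_mkseq. Qed.

Lemma factor_infix (x y : seq A) : infix x y -> factor u y -> factor u x.
Proof.
move=> /infixP' [s [s' E]] [k Hk]; exists (k + size s).
rewrite /occurs_at; apply: (@eq_from_nth _ (u 0)); first by rewrite size_mkseq.
move=> t ht; rewrite nth_mkseq //.
have : nth (u 0) y (size s + t) = nth (u 0) x t by rewrite E nth_cat ltnNge leq_addr /= addKn nth_cat ht.
move=> <-; rewrite Hk nth_mkseq ?addnA //.
rewrite E !size_cat; lia.
Qed.

End Inf.

From Stdlib Require Import Classical.

Theorem lemma1 (A : finType) (Th : seq A -> seq A) (u : nat -> A) :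
  involutive_antimorphism Th -> recurrent u -> finite_defect Th u ->
  forall w, factor u w -> factor u (Th w).
Proof.
move=> HT Hrec [K HK] w [i Hi].
pose D := fun n => defect Th (pre u n).
have Dmono : forall m n, m <= n -> (D m <= D n)%R.
  move=> m n /subnK <-; elim: (n - m) => [|k IH]; first by rewrite add0n.
  apply: (Order.le_trans IH); rewrite addSn /D preS; exact: defect_rcons.
have DK : forall n, (D n <= K)%R by move=> n; apply: HK; apply: factor_pre.
have [N HN] : exists N, forall n, (D n <= D N)%R.
  apply: NNPP => H.
  have H' : forall N, exists n, (D N < D n)%R.
    move=> N; apply: NNPP => H2; apply: H; exists N => n.
    rewrite Order.TotalTheory.leNgt; apply/negP => H3; apply: H2; by exists n.
  have Hk : forall k : nat, exists n, (D 0 + k%:Z <= D n)%R.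
    elim=> [|k [n Hn]]; first by exists 0; rewrite GRing.addr0.
    have [n' Hn'] := H' n; exists n'; lia.
  have [n Hn] := Hk (absz (K - D 0)).+1; have := DK n; have := Num.Theory.ler_norm (K - D 0); rewrite -abszE; move: Hn; move: (absz (K - D 0)) => t; move: (D n) (D 0) => a b; lia.
pose m := (N + i + size w).+1.
have [j [j1 Hj]] := Hrec (pre u m) (factor_pre u m) 1.
pose n := j.-1 + m.
have En : n.+1 = j + m by rewrite /n -addSn prednK.
have Nn : N <= n by rewrite /n /m; lia.
have Dn : (D n.+1 <= D n)%R := Order.le_trans (HN _) (Dmono _ _ Nn).
have Ef : pre u m = mkseq (fun k => u (j + k)) m by rewrite {1}Hj size_mkseq.
have Ev : pre u n.+1 = pre u j ++ pre u m by rewrite En pre_add -Ef.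
have Hmn : infix (pre u m) (pre u n) by rewrite /n addnC pre_add; apply: prefix_infix.
have sfv : suffix (pre u m) (rcons (pre u n) (u n)) by rewrite -preS Ev; apply: suffix_suffix.
have an : u n \in pre u n.
  case/lastP E: (pre u m) sfv => [|f' c].
    by move=> _; have := congr1 size E; rewrite size_mkseq.
  rewrite suffix_rcons => /andP [/eqP <- _].
  by apply: (mem_infix Hmn); rewrite E mem_rcons mem_head.
have [q [qin qn]] : exists q, q \in Pal Th (rcons (pre u n) (u n)) /\ q \notin Pal Th (pre u n).
  by apply: (new_pal_exists HT an); rewrite -preS.
move: qin; rewrite mem_Pal => /andP [iq /eqP pq].
have nq : ~~ infix q (pre u n) by move: qn; rewrite mem_Pal pq eqxx andbT.
have sq := new_suffix iq nq.
case: (leqP (size q) (size (pre u m))) => Hs.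
  exfalso; apply/(negP nq)/(infix_trans _ Hmn); apply: suffixW; exact: suffix_cmp sq sfv Hs.
have /suffixP' [r Er] : suffix (pre u m) q := suffix_cmp sfv sq (ltnW Hs).
have Hw : infix w (pre u m).
  have -> : pre u m = pre u (i + size w) ++ mkseq (fun k => u (i + size w + k)) (m - (i + size w)).
    by rewrite -pre_add subnKC // /m; lia.
  by rewrite pre_add -Hi -catA; apply: infix_infix.
have H : infix (Th w) (pre u n.+1).
  apply: (infix_trans (infix_Th HT Hw)).
  rewrite preS; apply: (infix_trans _ iq).
  by rewrite -pq Er (Th_cat HT); apply: prefix_infix.
exact: factor_infix H (factor_pre _ _).
Qed.
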